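(* Let $G$ be a $2$-connected graph and $x,y\in V(G)$. Suppose $G\setminus\{x,y\}$ has $k\ge2$ components and $\{x,y\}$ is not an admissible $2$-cut of $G$. Then (1) if $k\ge3$, $G\cong K_{2,3}$; (2) if $k=2$ and $xy\in E(G)$, $G\cong K_4\setminus e$; (3) if $k=2$ and $xy\notin E(G)$, at least one component of $G\setminus\{x,y\}$ is a single vertex.
   Context: Graphs are finite and simple. 2-sum: for $i=1,2$ let $G_i$ be disjoint graphs and $z_i\in V(G_i)$ incident with exactly two edges $x_iz_i,y_iz_i$; let $G_i'=G_i\setminus z_i$ if $x_iy_i\notin E(G_i)$ and $G_i'=G_i\setminus z_i\setminus x_iy_i$ otherwise. A 2-sum over $z_1,z_2$ is obtained from $G_1',G_2'$ by identifying $x_1$ with $x_2$ and $y_1$ with $y_2$ and then, if $x_iy_i\in E(G_i)$ for at least one $i$, adding an edge between the two identified vertices, which are called the joins. Two vertices $x,y$ of a $2$-connected graph $G$ form an admissible $2$-cut if $G$ is a 2-sum of two graphs, each having fewer edges than $G$, whose set of joins is $\{x,y\}$. *)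

(* Defs.v *)
From mathcomp Require Import all_boot.
Set Implicit Arguments. Unset Strict Implicit. Unset Printing Implicit Defensive.

Definition simple_graph (T : finType) (e : rel T) : Prop :=
  symmetric e /\ irreflexive e.

Definition sub_rel (T : finType) (e : rel T) (S : {set T}) : rel T :=
  fun u v => [&& u \in S, v \in S & e u v].

Definition connected_on (T : finType) (e : rel T) (S : {set T}) : Prop :=
  forall u v, u \in S -> v \in S -> connect (sub_rel e S) u v.

Definition two_connected (T : finType) (e : rel T) : Prop :=
  3 <= #|T| /\ connected_on e [set: T] /\ forall v, connected_on e [set~ v].

Definition components (T : finType) (e : rel T) (S : {set T}) : {set {set T}} :=
  [set [set v in S | connect (sub_rel e S) u v] | u in S].

(* number of edges (each unordered edge is counted twice as ordered pair) *)
Definition nedges (T : finType) (e : rel T) : nat :=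
  #|[set p : T * T | e p.1 p.2]|./2.

(* G (on T, edge relation e) is (isomorphic to) the 2-sum of G1 and G2 over
   z1, z2, where x_i, y_i are the two neighbours of z_i, x1 is identified with
   x2 (giving x) and y1 with y2 (giving y). f1, f2 embed V(G_i) \ z_i into V(G). *)
Definition is_2sum (T1 T2 T : finType) (e1 : rel T1) (e2 : rel T2) (e : rel T)
    (z1 x1 y1 : T1) (z2 x2 y2 : T2) (x y : T) : Prop :=
  let e1' := fun a b => e1 a b && ~~ (((a == x1) && (b == y1)) || ((a == y1) && (b == x1))) in
  let e2' := fun a b => e2 a b && ~~ (((a == x2) && (b == y2)) || ((a == y2) && (b == x2))) in
  [/\ x1 != y1, x2 != y2,
      (forall v, e1 z1 v = (v == x1) || (v == y1)),
      (forall v, e2 z2 v = (v == x2) || (v == y2)) &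
  (exists (f1 : T1 -> T) (f2 : T2 -> T),
    [/\ [/\ {in [set~ z1] &, injective f1},
            {in [set~ z2] &, injective f2} &
            [/\ f1 x1 = x, f1 y1 = y, f2 x2 = x & f2 y2 = y]],
        (forall v, (exists a, a != z1 /\ f1 a = v) \/ (exists b, b != z2 /\ f2 b = v)),
        (forall a b, a != z1 -> b != z2 -> f1 a = f2 b ->
            ((a == x1) && (b == x2)) || ((a == y1) && (b == y2))) &
        (forall u v, e u v <->
           (exists a b, [/\ a != z1, b != z1, e1' a b, f1 a = u & f1 b = v]) \/
           (exists a b, [/\ a != z2, b != z2, e2' a b, f2 a = u & f2 b = v]) \/
           ((((u == x) && (v == y)) || ((u == y) && (v == x))) && (e1 x1 y1 || e2 x2 y2)))])].

Definition admissible_2cut (T : finType) (e : rel T) (x y : T) : Prop :=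
  exists (T1 T2 : finType) (e1 : rel T1) (e2 : rel T2)
         (z1 x1 y1 : T1) (z2 x2 y2 : T2),
    [/\ simple_graph e1, simple_graph e2,
        nedges e1 < nedges e, nedges e2 < nedges e &
        is_2sum e1 e2 e z1 x1 y1 z2 x2 y2 x y].

Definition isomorphic (T T' : finType) (e : rel T) (e' : rel T') : Prop :=
  exists f : T -> T', bijective f /\ forall u v, e' (f u) (f v) = e u v.

Definition K23 : rel ('I_2 + 'I_3)%type :=
  fun u v => match u, v with
             | inl _, inr _ | inr _, inl _ => true
             | _, _ => false end.

Definition K4_minus_e : rel 'I_4 :=
  fun u v => (u != v) && ~~ ((val u <= 1) && (val v <= 1)).

(* Main.v *)
Require Import Defs.
From mathcomp Require Import all_boot.
Set Implicit Arguments. Unset Strict Implicit. Unset Printing Implicit Defensive.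


Lemma even_edges (T : finType) (e : rel T) :
  simple_graph e -> ~~ odd #|[set p : T * T | e p.1 p.2]|.
Proof.
move=> [sym irr]; set P := [set p : T * T | _].
set L := [set p : T * T | (enum_rank p.1 < enum_rank p.2)%N].
have H : #|P :\: L| = #|P :&: L|.
  have -> : P :\: L = [set (p.2, p.1) | p in P :&: L].
    apply/setP => -[u v]; rewrite !inE /=; apply/andP/imsetP.
    - move=> [Hn He]; exists (v, u) => //; rewrite !inE /= sym He /=.
      rewrite ltn_neqAle leqNgt Hn andbT; apply/negP => /eqP/val_inj/enum_rank_inj Hvu.
      by move: He; rewrite Hvu irr.
    - move=> [[a b]]; rewrite !inE /= => /andP[Hab Hlt] [-> ->].
      by rewrite -leqNgt ltnW // sym.
  by rewrite card_in_imset // => -[a b] [c d] _ _ /= [-> ->].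
by rewrite -(cardsID L P) H addnn odd_double.
Qed.

Lemma nedges_lt (T1 T : finType) (e1 : rel T1) (e : rel T) :
  simple_graph e1 -> simple_graph e ->
  #|[set p : T1 * T1 | e1 p.1 p.2]| < #|[set p : T * T | e p.1 p.2]| ->
  nedges e1 < nedges e.
Proof.
move=> s1 s; rewrite /nedges.
move: (even_edges s1) (even_edges s).
set a := #|_|; set b := #|_| => ha hb.
move=> H; rewrite -ltn_double.
have Ea : (a./2).*2 = a by rewrite -{2}(odd_double_half a) (negbTE ha).
have Eb : (b./2).*2 = b by rewrite -{2}(odd_double_half b) (negbTE hb).
by rewrite Ea Eb.
Qed.


Definition xyp (T : eqType) (x y u v : T) :=
  ((u == x) && (v == y)) || ((u == y) && (v == x)).

Definition sideT (T : finType) (A : {set T}) : finType := option {v : T | v \in A}.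

Definition sideE (T : finType) (e : rel T) (A : {set T}) (x y : T) (b : bool) :
  rel (sideT A) :=
  fun a c => match a, c with
  | Some u, Some v => e (val u) (val v) && (b || ~~ xyp x y (val u) (val v))
  | None, Some v => (val v == x) || (val v == y)
  | Some v, None => (val v == x) || (val v == y)
  | None, None => false end.

Definition side_ok (T : finType) (e : rel T) (x y : T) (A : {set T}) (b : bool) :=
  exists r r' (p : T * T), [/\ r \notin A, e r x, r' \notin A & e r' y] /\ [/\ e p.1 p.2,
    p \notin [:: (r, x); (x, r); (r', y); (y, r')] &
    ~~ [&& p.1 \in A, p.2 \in A & (b || ~~ xyp x y p.1 p.2)]].

Lemma insub_val (T : finType) (A : {set T}) (u : {v : T | v \in A}) z :
  sval u = z -> insub z = Some u.
Proof. by move=> <-; exact: valK. Qed.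

Lemma insub_none (T : finType) (A : {set T}) z :
  z \notin A -> insub z = None :> option {v : T | v \in A}.
Proof. by move=> h; apply: insubF; exact: negbTE h. Qed.

Lemma side_card (T : finType) (e : rel T) (x y : T) (A : {set T}) (b : bool) :
  simple_graph e -> side_ok e x y A b ->
  #|[set q : sideT A * sideT A | sideE e x y b q.1 q.2]| <
  #|[set q : T * T | e q.1 q.2]|.
Proof.
move=> [sym irr] [r [r' [p [[hr hrx hr' hry] [hp hpl hpA]]]]].
pose F (q : sideT A * sideT A) : T * T := match q with
 | (Some u, Some v) => (val u, val v)
 | (None, Some v) => if val v == x then (r, x) else (r', y)
 | (Some u, None) => if val u == x then (x, r) else (y, r')
 | (None, None) => (x, x) end.
pose G (q : T * T) : sideT A * sideT A := (insub q.1, insub q.2).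
set P1 := [set q | _]; set P := [set q | e _ _].
have cG : {in P1, cancel F G}.
  move=> [[u|] [v|]]; rewrite inE /= => h; rewrite /G /=.
  - by rewrite !valK.
  - case: ifP => hux /=; first by rewrite (insub_none hr) (insub_val (eqP hux)).
    by move: h; rewrite hux /= => /eqP h; rewrite (insub_none hr') (insub_val h).
  - case: ifP => hux /=; first by rewrite (insub_none hr) (insub_val (eqP hux)).
    by move: h; rewrite hux /= => /eqP h; rewrite (insub_none hr') (insub_val h).
  - by [].
have sub : F @: P1 \subset P.
  apply/subsetP => _ /imsetP[[[u|] [v|]] hq ->]; rewrite inE /= in hq; rewrite inE /=.
  - by case/andP: hq.
  - by case: ifP => _ /=; rewrite sym.
  - by case: ifP.
  - by [].
have nin : p \notin F @: P1.
  apply/imsetP => -[[[u|] [v|]] hq hpe]; rewrite inE /= in hq.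
  - by move: hpA; rewrite hpe /= (valP u) (valP v); case/andP: hq => _ ->.
  - by move: hpl; rewrite hpe /F; case: ifP => _; rewrite !inE eqxx ?orbT.
  - by move: hpl; rewrite hpe /F; case: ifP => _; rewrite !inE eqxx ?orbT.
  - by [].
rewrite -(card_in_imset (can_in_inj cG)); apply: proper_card; apply/properP.
by split=> //; exists p => //; rewrite inE.
Qed.



Lemma xyp_sym (T : eqType) (x y u v : T) : xyp x y u v = xyp x y v u.
Proof. by rewrite /xyp orbC andbC [X in _ || X]andbC. Qed.

Lemma side_simple (T : finType) (e : rel T) (x y : T) (A : {set T}) (b : bool) :
  simple_graph e -> simple_graph (sideE e x y b : rel (sideT A)).
Proof.
move=> [sym irr]; split.
- by move=> [u|] [v|] //=; rewrite sym xyp_sym.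
- by move=> [u|] //=; rewrite irr.
Qed.

Lemma some_eq (T : finType) (A : {set T}) (u : {v : T | v \in A}) z (hz : z \in A) :
  (Some u == Some (exist _ z hz) :> sideT A) = (sval u == z).
Proof. by apply/eqP/eqP => [[->]//| h]; congr Some; apply: val_inj. Qed.

Lemma sig_eq (T : finType) (A : {set T}) (u : {v : T | v \in A}) z (hz : z \in A) :
  (u == exist _ z hz) = (sval u == z).
Proof. by apply/eqP/eqP => [->//| h]; apply: val_inj. Qed.

Lemma two_sum_adm (T : finType) (e : rel T) (x y : T) (S : {set T}) (b1 b2 : bool) :
  simple_graph e -> x != y -> S \subset ~: [set x; y] ->
  (forall u v, u \in S -> v \notin S -> v \notin [set x; y] -> ~~ e u v) ->
  b1 || b2 = e x y ->
  side_ok e x y (S :|: [set x; y]) b1 -> side_ok e x y (~: S) b2 ->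
  admissible_2cut e x y.
Proof.
move=> hs nxy hS hcl hb so1 so2.
have [sym irr] := hs.
set A1 := S :|: [set x; y]; set A2 := ~: S.
have xS : x \notin S by apply/negP => /(subsetP hS); rewrite !inE eqxx.
have yS : y \notin S by apply/negP => /(subsetP hS); rewrite !inE eqxx orbT.
have hx1 : x \in A1 by rewrite !inE eqxx orbT.
have hy1 : y \in A1 by rewrite !inE eqxx !orbT.
have hx2 : x \in A2 by rewrite inE.
have hy2 : y \in A2 by rewrite inE.
exists (sideT A1), (sideT A2), (sideE e x y b1 : rel (sideT A1)),
  (sideE e x y b2 : rel (sideT A2)), None, (Some (exist _ x hx1)),
  (Some (exist _ y hy1)), None, (Some (exist _ x hx2)), (Some (exist _ y hy2)).
have s1 := side_simple x y A1 b1 hs.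
have s2 := side_simple x y A2 b2 hs.
split => //; first exact: nedges_lt s1 hs (side_card hs so1).
  exact: nedges_lt s2 hs (side_card hs so2).
have E3 : (sideE e x y b1 (Some (exist _ x hx1)) (Some (exist _ y hy1)) ||
           sideE e x y b2 (Some (exist _ x hx2)) (Some (exist _ y hy2))) = e x y.
  rewrite /= /xyp !eqxx /=; move: hb; by case: (b1); case: (b2); case: (e x y).
rewrite /is_2sum /=; split.
- by rewrite some_eq /=.
- by rewrite some_eq /=.
- by case=> [u|] //=; rewrite !some_eq.
- by case=> [u|] //=; rewrite !some_eq.
pose f1 (a : sideT A1) : T := if a is Some u then sval u else x.
pose f2 (a : sideT A2) : T := if a is Some u then sval u else x.
exists f1, f2; split.
- split => //.
  + by move=> [a|] [c|]; rewrite !inE //= => _ _ h; congr Some; apply: val_inj.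
  + by move=> [a|] [c|]; rewrite !inE //= => _ _ h; congr Some; apply: val_inj.
- move=> v; case: (boolP (v \in S)) => hv.
  + have h : v \in A1 by rewrite inE hv.
    by left; exists (Some (exist _ v h)).
  + have h : v \in A2 by rewrite inE.
    by right; exists (Some (exist _ v h)).
- move=> [a|] [c|] // _ _ /= h.
  rewrite !some_eq /= -h.
  have : sval a \in A1 := valP a.
  have : sval c \in A2 := valP c.
  rewrite -h !inE => /negbTE ->; rewrite orFb.
  by case/orP => ->; rewrite ?orbT.
move=> u v; split.
- move=> he; case hxy: (xyp x y u v).
    right; right; rewrite E3 -/(xyp x y u v) hxy /=.
    move: hxy; rewrite /xyp => /orP[]/andP[/eqP hu /eqP hv]; move: he; rewrite hu hv //.
    by rewrite sym.
  have inA1 : forall a c, e a c -> a \in S -> c \in A1.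
    move=> a c hac ha; apply: contraT => hc.
    have hcS : c \notin S by apply: contra hc => h; rewrite in_setU h.
    have hcxy : c \notin [set x; y] by apply: contra hc => h; rewrite in_setU h orbT.
    by move: (hcl a c ha hcS hcxy); rewrite hac.
  case: (boolP ((u \in S) || (v \in S))) => huv.
  + left.
    have hu : u \in A1.
      case/orP: huv => h; first by rewrite inE h.
      by apply: (inA1 v u); rewrite // sym.
    have hv : v \in A1.
      case/orP: huv => h; last by rewrite inE h.
      exact: (inA1 u v).
    exists (Some (exist _ u hu)), (Some (exist _ v hv)); split => //=.
    by rewrite !some_eq /= -/(xyp x y u v) hxy he orbT.
  + right; left.
    move: huv; rewrite negb_or => /andP[hu hv].
    have hu' : u \in A2 by rewrite inE.
    have hv' : v \in A2 by rewrite inE.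
    exists (Some (exist _ u hu')), (Some (exist _ v hv')); split => //=.
    by rewrite !some_eq /= -/(xyp x y u v) hxy he orbT.
- case => [[a [c [ha hc h hu hv]]] | [[a [c [ha hc h hu hv]]] | h3]].
  + move: ha hc h hu hv; case: a => [a|] //; case: c => [c|] //= _ _.
    by case/andP => /andP[he _] _ <- <-.
  + move: ha hc h hu hv; case: a => [a|] //; case: c => [c|] //= _ _.
    by case/andP => /andP[he _] _ <- <-.
  + move: h3; rewrite E3 => /andP[+ exy].
    by rewrite /xyp => /orP[]/andP[/eqP -> /eqP ->] //; rewrite sym.
Qed.



Definition comp (T : finType) (e : rel T) (S : {set T}) (u : T) :=
  [set v in S | connect (sub_rel e S) u v].

Lemma comps_E (T : finType) (e : rel T) (S : {set T}) :
  components e S = [set comp e S u | u in S].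
Proof. by []. Qed.

Lemma sub_sym (T : finType) (e : rel T) (S : {set T}) :
  symmetric e -> symmetric (sub_rel e S).
Proof. by move=> sym u v; rewrite /sub_rel sym andbCA. Qed.

Lemma comp_in (T : finType) (e : rel T) (S : {set T}) u : u \in S -> u \in comp e S u.
Proof. by move=> h; rewrite inE h connect0. Qed.

Lemma comp_eq (T : finType) (e : rel T) (S : {set T}) u v :
  symmetric e -> v \in comp e S u -> comp e S v = comp e S u.
Proof.
move=> sym; rewrite inE => /andP[hv huv]; apply/setP => w; rewrite !inE.
case: (w \in S) => //=; apply/idP/idP => h.
- exact: connect_trans huv h.
- apply: connect_trans _ h; by rewrite (sym_connect_sym (sub_sym S sym)).
Qed.

Lemma comp_sub (T : finType) (e : rel T) (S : {set T}) u : comp e S u \subset S.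
Proof. by apply/subsetP => v; rewrite inE => /andP[]. Qed.

Lemma comp_closed (T : finType) (e : rel T) (S : {set T}) u a b :
  a \in comp e S u -> b \in S -> e a b -> b \in comp e S u.
Proof.
rewrite !inE => /andP[ha hua] hb hab; rewrite hb /=.
by apply: connect_trans hua (connect1 _); rewrite /sub_rel ha hb hab.
Qed.

Lemma crossing (T : finType) (r : rel T) (A : {pred T}) a b :
  connect r a b -> a \in A -> b \notin A -> exists u v, [/\ r u v, u \in A & v \notin A].
Proof.
move=> /connectP[p]; elim: p a => [|c p IH] a /=; first by move=> _ -> ->.
move=> /andP[hac hp] hb ha; case: (boolP (c \in A)) => hc.
- exact: IH hp hb hc.
- by exists a, c.
Qed.

Lemma comp_adj (T : finType) (e : rel T) (x y : T) u :
  simple_graph e -> two_connected e -> x != y -> u \in ~: [set x; y] ->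
  exists2 w, w \in comp e (~: [set x; y]) u & e w y.
Proof.
move=> [sym irr] [_ [_ h2]] nxy hu.
set X := ~: [set x; y].
have hu' : u \in [set~ x] by move: hu; rewrite !inE negb_or => /andP[].
have hy' : y \in [set~ x] by rewrite !inE eq_sym.
have := h2 x u y hu' hy'.
move=> /crossing /(_ (comp_in e hu)).
have hyC : y \notin comp e X u by rewrite !inE eqxx orbT.
case/(_ hyC) => a [b [hab haC hbC]].
move: hab; rewrite /sub_rel !inE => /and3P[_ hbx eab].
exists a => //.
case: (boolP (b \in X)) => hbX.
- by move: hbC; rewrite (comp_closed haC hbX eab).
- move: hbX; rewrite !inE negbK (negbTE hbx) /= => /eqP hb.
  by rewrite -hb.
Qed.

Lemma comp_edge (T : finType) (e : rel T) (S : {set T}) u a b :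
  symmetric e -> a \in comp e S u -> b \in comp e S u -> a != b ->
  exists c d, [/\ c \in comp e S u, d \in comp e S u & e c d].
Proof.
move=> sym ha hb nab.
have hc : connect (sub_rel e S) a b.
  rewrite -(comp_eq sym ha) in hb; by move: hb; rewrite inE => /andP[].
have := crossing hc (_ : a \in [set a]).
rewrite in_set1 eqxx => /(_ isT); rewrite in_set1 eq_sym (negbTE nab).
case=> // c [d [hcd hc1 hd1]]; move: hc1 hcd; rewrite in_set1 => /eqP ->.
rewrite /sub_rel => /and3P[_ hdS ead].
by exists a, d; split => //; apply: comp_closed ha hdS ead.
Qed.



Lemma side_two (T : finType) (e : rel T) (x y : T) (A : {set T}) (b : bool) r r' r2 :
  x \in A -> y \in A -> x != y -> r \notin A -> r' \notin A -> r2 \notin A -> r2 != r ->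
  e r x -> e r' y -> e r2 x -> side_ok e x y A b.
Proof.
move=> hx hy nxy hr hr' hr2 n2 erx ery e2x.
exists r, r', (r2, x); split=> //; split=> //=; last by rewrite (negbTE hr2).
have n2x : r2 != x by apply: contraNneq hr2 => ->.
have n2y : r2 != y by apply: contraNneq hr2 => ->.
by rewrite !inE !xpair_eqE (negbTE n2) (negbTE n2x) (negbTE n2y) (negbTE nxy) ?andbF ?andFb.
Qed.

Lemma side_edge (T : finType) (e : rel T) (x y : T) (A : {set T}) (b : bool) r r' a c :
  x \in A -> y \in A -> r \notin A -> r' \notin A -> a \notin A -> c \notin A ->
  e r x -> e r' y -> e a c -> side_ok e x y A b.
Proof.
move=> hx hy hr hr' ha hc erx ery eac.
exists r, r', (a, c); split=> //; split=> //=; last by rewrite (negbTE ha).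
have nax : a != x by apply: contraNneq ha => ->.
have nay : a != y by apply: contraNneq ha => ->.
have ncx : c != x by apply: contraNneq hc => ->.
have ncy : c != y by apply: contraNneq hc => ->.
by rewrite !inE !xpair_eqE (negbTE nax) (negbTE nay) (negbTE ncx) (negbTE ncy) ?andbF ?andFb.
Qed.

Lemma side_xy (T : finType) (e : rel T) (x y : T) (A : {set T}) r r' :
  x \in A -> y \in A -> x != y -> r \notin A -> r' \notin A ->
  e r x -> e r' y -> e x y -> side_ok e x y A false.
Proof.
move=> hx hy nxy hr hr' erx ery exy.
exists r, r', (x, y); split=> //; split=> //=; last by rewrite /xyp !eqxx /= ?andbF ?andFb.
have nrx : x != r by apply: contraNneq hr => <-.
have nry : y != r by apply: contraNneq hr => <-.
have nr'x : x != r' by apply: contraNneq hr' => <-.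
by rewrite !inE !xpair_eqE (negbTE nrx) (negbTE nry) (negbTE nr'x) (negbTE nxy) eq_sym (negbTE nxy) ?andbF ?andFb.
Qed.



Lemma iso_K4e (T : finType) (e : rel T) (x y u v : T) :
  simple_graph e -> (forall t, [|| t == u, t == v, t == x | t == y]) ->
  x != y -> u != v -> u != x -> u != y -> v != x -> v != y ->
  e x y -> ~~ e u v -> e u x -> e u y -> e v x -> e v y -> isomorphic e K4_minus_e.
Proof.
move=> [sym irr] cov nxy nuv nux nuy nvx nvy exy euv eux euy evx evy.
pose o0 := @Ordinal 4 0 isT; pose o1 := @Ordinal 4 1 isT.
pose o2 := @Ordinal 4 2 isT; pose o3 := @Ordinal 4 3 isT.
pose f z := if z == u then o0 else if z == v then o1 else if z == x then o2 else o3.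
pose g (i : 'I_4) := nth x [:: u; v; x; y] i.
have fu : f u = o0 by rewrite /f eqxx.
have fv : f v = o1 by rewrite /f eq_sym (negbTE nuv) eqxx.
have fx : f x = o2 by rewrite /f eq_sym (negbTE nux) eq_sym (negbTE nvx) eqxx.
have fy : f y = o3 by rewrite /f eq_sym (negbTE nuy) eq_sym (negbTE nvy) eq_sym (negbTE nxy).
exists f; split.
  exists g.
    by move=> t; case/or4P: (cov t) => /eqP ->; rewrite ?fu ?fv ?fx ?fy.
  by case=> [[|[|[|[|i]]]] hi] //; apply: val_inj; rewrite /g /= ?fu ?fv ?fx ?fy.
have eyx : e y x by rewrite sym.
have evu : ~~ e v u by rewrite sym.
have exu : e x u by rewrite sym.
have eyu : e y u by rewrite sym.
have exv : e x v by rewrite sym.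
have eyv : e y v by rewrite sym.
move=> a b; case/or4P: (cov a) => /eqP ->; case/or4P: (cov b) => /eqP ->;
  rewrite ?fu ?fv ?fx ?fy ?irr ?exy ?eyx ?(negbTE euv) ?(negbTE evu) ?eux ?exu
    ?euy ?eyu ?evx ?exv ?evy ?eyv; by [].
Qed.

Lemma iso_K23 (T : finType) (e : rel T) (x y p q w : T) :
  simple_graph e -> (forall t, [|| t == x, t == y, t == p, t == q | t == w]) ->
  x != y -> p != q -> q != w -> w != p ->
  p != x -> p != y -> q != x -> q != y -> w != x -> w != y ->
  ~~ e x y -> ~~ e p q -> ~~ e q w -> ~~ e w p ->
  e p x -> e p y -> e q x -> e q y -> e w x -> e w y -> isomorphic e K23.
Proof.
move=> [sym irr] cov nxy npq nqw nwp npx npy nqx nqy nwx nwy exy epq eqw ewp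
  epx epy eqx eqy ewx ewy.
pose f z : ('I_2 + 'I_3)%type := if z == x then inl (@Ordinal 2 0 isT)
  else if z == y then inl (@Ordinal 2 1 isT)
  else if z == p then inr (@Ordinal 3 0 isT)
  else if z == q then inr (@Ordinal 3 1 isT) else inr (@Ordinal 3 2 isT).
pose g (z : ('I_2 + 'I_3)%type) := match z with
  | inl i => nth x [:: x; y] i | inr i => nth x [:: p; q; w] i end.
have fx : f x = inl (@Ordinal 2 0 isT) by rewrite /f eqxx.
have fy : f y = inl (@Ordinal 2 1 isT) by rewrite /f eq_sym (negbTE nxy) eqxx.
have fp : f p = inr (@Ordinal 3 0 isT) by rewrite /f (negbTE npx) (negbTE npy) eqxx.
have fq : f q = inr (@Ordinal 3 1 isT)
  by rewrite /f (negbTE nqx) (negbTE nqy) eq_sym (negbTE npq) eqxx.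
have fw : f w = inr (@Ordinal 3 2 isT)
  by rewrite /f (negbTE nwx) (negbTE nwy) (negbTE nwp) eq_sym (negbTE nqw).
exists f; split.
  exists g.
    by move=> t; case/orP: (cov t) => [/eqP ->|/or4P[]/eqP ->]; rewrite ?fx ?fy ?fp ?fq ?fw.
  case=> [[[|[|i]] hi]|[[|[|[|i]]] hi]] //; rewrite /g /= ?fx ?fy ?fp ?fq ?fw;
    by f_equal; apply: val_inj.
have eyx : ~~ e y x by rewrite sym.
have eqp : ~~ e q p by rewrite sym.
have ewq : ~~ e w q by rewrite sym.
have epw : ~~ e p w by rewrite sym.
have exp : e x p by rewrite sym.
have eyp : e y p by rewrite sym.
have exq : e x q by rewrite sym.
have eyq : e y q by rewrite sym.
have exw : e x w by rewrite sym.
have eyw : e y w by rewrite sym.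
move=> a b; case/orP: (cov a) => [/eqP ->|/or4P[]/eqP ->]; case/orP: (cov b) => [/eqP ->|/or4P[]/eqP ->];
  rewrite ?fx ?fy ?fp ?fq ?fw ?irr ?(negbTE exy) ?(negbTE eyx) ?(negbTE epq)
    ?(negbTE eqp) ?(negbTE eqw) ?(negbTE ewq) ?(negbTE ewp) ?(negbTE epw)
    ?epx ?epy ?eqx ?eqy ?ewx ?ewy ?exp ?eyp ?exq ?eyq ?exw ?eyw; by [].
Qed.



Theorem mainTheorem5 (T : finType) (e : rel T) (x y : T) :
  simple_graph e -> two_connected e ->
  2 <= #|components e (~: [set x; y])| ->
  ~ admissible_2cut e x y ->
  [/\ (3 <= #|components e (~: [set x; y])| -> isomorphic e K23),
      (#|components e (~: [set x; y])| = 2 -> e x y -> isomorphic e K4_minus_e) &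
      (#|components e (~: [set x; y])| = 2 -> ~~ e x y ->
         exists2 C, C \in components e (~: [set x; y]) & #|C| = 1)].
Proof.
move=> hs h2c hk hna.
have [sym irr] := hs.
have h2 := h2c.2.2.
rewrite comps_E in hk *.
set X := ~: [set x; y] in hk *.
pose C := comp e X.
have KE : [set comp e X t | t in X] = [set C t | t in X] by [].
rewrite KE in hk *.
have Cin t : t \in X -> t \in C t := @comp_in _ e X t.
have Ceq t s : s \in C t -> C s = C t := comp_eq sym.
have Csub t : C t \subset X := comp_sub e X t.
have CX t z : z \in C t -> z \in X := fun h => subsetP (Csub t) z h.
have Cdisj t s z : z \in C t -> z \in C s -> C t = C s.
  by move=> h1 h2'; rewrite -(Ceq _ _ h1) (Ceq _ _ h2').
have [u [v [hu hv nuv]]] : exists u v, [/\ u \in X, v \in X & C u != C v].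
  move/card_gt1P: hk => [C1 [C2 [h1 h2' n12]]].
  case/imsetP: h1 => u hu E1; case/imsetP: h2' => v hv E2.
  by exists u, v; rewrite -E1 -E2.
have nxy : x != y.
  apply/negP => /eqP exy; move: nuv; apply/negP; rewrite negbK; apply/eqP.
  apply: Ceq; rewrite /C /comp inE hu /=.
  have EX : X = [set~ x] by rewrite /X -exy setUid.
  by rewrite EX; apply: h2; rewrite -EX.
have xX : x \notin X by rewrite !inE eqxx.
have yX : y \notin X by rewrite !inE eqxx orbT.
have adjy t : t \in X -> exists2 w, w \in C t & e w y.
  by move=> ht; apply: comp_adj.
have adjx t : t \in X -> exists2 w, w \in C t & e w x.
  move=> ht; have ht' : t \in ~: [set y; x] by rewrite setUC.
  have := comp_adj hs h2c _ ht'; rewrite eq_sym => /(_ nxy).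
  by rewrite /C /X setUC.
have closedC t a b : a \in C t -> b \notin C t -> b \notin [set x; y] -> ~~ e a b.
  move=> ha hb hbxy; apply/negP => eab.
  by move: hb; rewrite (comp_closed ha _ eab) // inE.
have xA1 t : x \in C t :|: [set x; y] by rewrite !inE eqxx orbT.
have yA1 t : y \in C t :|: [set x; y] by rewrite !inE eqxx !orbT.
have xA2 t : x \in ~: C t by rewrite inE; exact: contra (CX t x) xX.
have yA2 t : y \in ~: C t by rewrite inE; exact: contra (CX t y) yX.
have notA1 t s z : C s != C t -> z \in C s -> z \notin C t :|: [set x; y].
  move=> n hz; rewrite in_setU negb_or; apply/andP; split.
    by apply: contra n => hz'; apply/eqP; exact: Cdisj hz hz'.
  by move: (CX _ _ hz); rewrite /X in_setC.
have notA2 t z : z \in C t -> z \notin ~: C t by rewrite in_setC negbK.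
pose big t := exists a c, [/\ a \in C t, c \in C t & a != c].
have sideR_big t s b : s \in X -> C s != C t -> big s ->
    side_ok e x y (C t :|: [set x; y]) b.
  move=> hs' n [a [c [ha hc nac]]].
  have [c1 [d1 [h1 h2' e1]]] := comp_edge sym ha hc nac.
  have [r hr erx] := adjx s hs'; have [r' hr' ery] := adjy s hs'.
  exact: side_edge (xA1 t) (yA1 t) (notA1 _ _ _ n hr) (notA1 _ _ _ n hr')
    (notA1 _ _ _ n h1) (notA1 _ _ _ n h2') erx ery e1.
have sideS_big t b : t \in X -> big t -> side_ok e x y (~: C t) b.
  move=> ht [a [c [ha hc nac]]].
  have [c1 [d1 [h1 h2' e1]]] := comp_edge sym ha hc nac.
  have [r hr erx] := adjx t ht; have [r' hr' ery] := adjy t ht.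
  exact: side_edge (xA2 t) (yA2 t) (notA2 _ _ hr) (notA2 _ _ hr')
    (notA2 _ _ h1) (notA2 _ _ h2') erx ery e1.
have sideR_xy t s : s \in X -> C s != C t -> e x y ->
    side_ok e x y (C t :|: [set x; y]) false.
  move=> hs' n exy.
  have [r hr erx] := adjx s hs'; have [r' hr' ery] := adjy s hs'.
  exact: side_xy (xA1 t) (yA1 t) nxy (notA1 _ _ _ n hr) (notA1 _ _ _ n hr') erx ery exy.
have sideS_xy t : t \in X -> e x y -> side_ok e x y (~: C t) false.
  move=> ht exy.
  have [r hr erx] := adjx t ht; have [r' hr' ery] := adjy t ht.
  exact: side_xy (xA2 t) (yA2 t) nxy (notA2 _ _ hr) (notA2 _ _ hr') erx ery exy.
have sideR_two t s1 s2 b : s1 \in X -> s2 \in X -> C s1 != C t -> C s2 != C t ->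
    C s1 != C s2 -> side_ok e x y (C t :|: [set x; y]) b.
  move=> h1 h2' n1 n2 n12.
  have [r hr erx] := adjx s1 h1; have [r' hr' ery] := adjy s1 h1.
  have [r2 hr2 er2] := adjx s2 h2'.
  have nr : r2 != r.
    apply: contra n12 => /eqP er; apply/eqP; apply: (Cdisj _ _ r hr).
    by rewrite -er.
  exact: side_two (xA1 t) (yA1 t) nxy (notA1 _ _ _ n1 hr) (notA1 _ _ _ n1 hr')
    (notA1 _ _ _ n2 hr2) nr erx ery er2.
have adm t b1 b2 : t \in X -> b1 || b2 = e x y ->
    side_ok e x y (C t :|: [set x; y]) b1 -> side_ok e x y (~: C t) b2 -> False.
  move=> ht hb so1 so2; apply: hna; apply: (two_sum_adm hs nxy (Csub t) _ hb so1 so2).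
  by move=> a b ha hb' hbxy; exact: (closedC t a b ha hb' hbxy).
have single t : t \in X -> ~ big t -> C t = [set t].
  move=> ht nb; apply/setP => z; rewrite in_set1; apply/idP/eqP => [hz|->]; last exact: Cin.
  case: (eqVneq z t) => // nz; exfalso; apply: nb; exists z, t; split => //; exact: Cin.
have nx t : t \in X -> t != x.
  by move=> ht; apply: contraTneq ht => ->.
have ny t : t \in X -> t != y.
  by move=> ht; apply: contraTneq ht => ->.
have exS t : t \in X -> C t = [set t] -> e t x.
  by move=> ht St; have [a ha eax] := adjx t ht; move: ha; rewrite St in_set1 => /eqP <-.
have eyS t : t \in X -> C t = [set t] -> e t y.
  by move=> ht St; have [a ha eay] := adjy t ht; move: ha; rewrite St in_set1 => /eqP <-.
have nadjS t s : C t = [set t] -> s \in X -> t != s -> ~~ e t s.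
  move=> St hs' nts; apply: (closedC t); first by rewrite St in_set1.
    by rewrite St in_set1 eq_sym.
  by move: hs'; rewrite /X in_setC.
have neqC t s : C t != C s -> t != s by move=> n; apply: contra n => /eqP ->.
split.
- move=> hk3.
  move/card_gt2P: hk3 => [C1 [C2 [C3 [[h1 h2' h3] [n12 n23 n31]]]]].
  case/imsetP: h1 => p hp E1; case/imsetP: h2' => q hq E2; case/imsetP: h3 => w hw E3.
  rewrite E1 E2 E3 in n12 n23 n31.
  have nexy : ~~ e x y.
    apply/negP => exy; apply: (adm p true false hp); first by rewrite exy.
      by apply: (sideR_two p q w) => //; rewrite eq_sym.
    exact: sideS_xy.
  have nb t : t \in X -> ~ big t.
    move=> ht hbig.
    apply: (adm t false false ht); first by rewrite (negbTE nexy).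
      case: (eqVneq (C t) (C p)) => [Etp|Ntp].
        by apply: (sideR_two t q w) => //; rewrite Etp // eq_sym.
      case: (eqVneq (C t) (C q)) => [Etq|Ntq].
        by apply: (sideR_two t p w) => //; rewrite ?Etq // eq_sym.
      by apply: (sideR_two t p q) => //; rewrite eq_sym.
    exact: sideS_big.
  have Sg t : t \in X -> C t = [set t] by move=> ht; apply: single ht (nb t ht).
  have Sp := Sg p hp; have Sq := Sg q hq; have Sw := Sg w hw.
  have npq := neqC _ _ n12; have nqw := neqC _ _ n23; have nwp := neqC _ _ n31.
  have cover t : [|| t == x, t == y, t == p, t == q | t == w].
    case: (boolP (t \in X)) => ht; last first.
      by move: ht; rewrite /X in_setC negbK !inE => /orP[]->; rewrite ?orbT.
    case: (eqVneq t p) => [->|ntp]; first by rewrite ?eqxx ?orbT.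
    case: (eqVneq t q) => [->|ntq]; first by rewrite ?eqxx ?orbT.
    case: (eqVneq t w) => [->|ntw]; first by rewrite ?eqxx ?orbT.
    exfalso; apply: hna.
    have hb : false || false = e x y by rewrite (negbTE nexy).
    apply: (two_sum_adm (S := [set p; q]) hs nxy _ _ hb).
    + by apply/subsetP => z /set2P[]->.
    + move=> a b /set2P[]-> hb' hbxy; move: hb'; rewrite !inE negb_or => /andP[hbp hbq].
        by apply: (nadjS p b Sp); [rewrite /X in_setC | rewrite eq_sym].
      by apply: (nadjS q b Sq); [rewrite /X in_setC | rewrite eq_sym].
    + apply: (@side_two _ e x y _ false w w t).
      * by rewrite !inE eqxx !orbT.
      * by rewrite !inE eqxx !orbT.
      * exact: nxy.
      * by rewrite !inE (negbTE nwp) eq_sym (negbTE nqw) (negbTE (nx w hw)) (negbTE (ny w hw)).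
      * by rewrite !inE (negbTE nwp) eq_sym (negbTE nqw) (negbTE (nx w hw)) (negbTE (ny w hw)).
      * by rewrite !inE (negbTE ntp) (negbTE ntq) (negbTE (nx t ht)) (negbTE (ny t ht)).
      * exact: ntw.
      * by apply: exS.
      * by apply: eyS.
      * exact: exS ht (Sg t ht).
    + apply: (@side_two _ e x y _ false p p q).
      * by rewrite !inE (eq_sym x p) (negbTE (nx p hp)) (eq_sym x q) (negbTE (nx q hq)).
      * by rewrite !inE (eq_sym y p) (negbTE (ny p hp)) (eq_sym y q) (negbTE (ny q hq)).
      * exact: nxy.
      * by rewrite !inE eqxx.
      * by rewrite !inE eqxx.
      * by rewrite !inE eqxx orbT.
      * by rewrite eq_sym.
      * by apply: exS.
      * by apply: eyS.
      * by apply: exS.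
  apply: (iso_K23 hs cover nxy npq nqw nwp (nx p hp) (ny p hp) (nx q hq) (ny q hq)
    (nx w hw) (ny w hw) nexy (nadjS p q Sp hq npq) (nadjS q w Sq hw nqw)
    (nadjS w p Sw hp nwp)); by [apply: exS | apply: eyS].
- move=> hk2 exy.
  have cov2 t : t \in X -> C t = C u \/ C t = C v.
    move=> ht; case: (eqVneq (C t) (C u)) => [|ntu]; first by left.
    case: (eqVneq (C t) (C v)) => [|ntv]; first by right.
    exfalso; have : 2 < #|[set C t | t in X]|.
      apply/card_gt2P; exists (C u), (C v), (C t); split; split => //;
        try exact: imset_f; by rewrite eq_sym.
    by rewrite hk2.
  have nbu : ~ big u.
    move=> hb; apply: (adm v true false hv); first by rewrite exy.
      exact: (sideR_big v u true hu nuv hb).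
    exact: sideS_xy.
  have nbv : ~ big v.
    move=> hb; apply: (adm u true false hu); first by rewrite exy.
      by apply: (sideR_big u v true hv _ hb); rewrite eq_sym.
    exact: sideS_xy.
  have Su := single u hu nbu; have Sv := single v hv nbv.
  have nuv' := neqC _ _ nuv.
  have cover t : [|| t == u, t == v, t == x | t == y].
    case: (boolP (t \in X)) => ht; last first.
      by move: ht; rewrite /X in_setC negbK !inE => /orP[]->; rewrite ?orbT.
    have := Cin t ht; case: (cov2 t ht) => ->; rewrite ?Su ?Sv in_set1 => ->;
      by rewrite ?orbT.
  apply: (iso_K4e hs cover nxy nuv' (nx u hu) (ny u hu) (nx v hv) (ny v hv) exy
    (nadjS u v Su hv nuv')); by [apply: exS | apply: eyS].
- move=> hk2 nexy.
  have c1 t : t \in X -> #|C t| <= 1 -> exists2 D, D \in [set C t | t in X] & #|D| = 1.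
    move=> ht hle; exists (C t); first exact: imset_f.
    apply/eqP; rewrite eqn_leq hle card_gt0; apply/set0Pn; exists t; exact: Cin.
  case: (leqP #|C u| 1) => [hle|hgu]; first exact: c1 hle.
  case: (leqP #|C v| 1) => [hle|hgv]; first exact: c1 hle.
  exfalso; move/card_gt1P: hgu => bu; move/card_gt1P: hgv => bv.
  apply: (adm u false false hu); first by rewrite (negbTE nexy).
    by apply: (sideR_big u v false hv _ bv); rewrite eq_sym.
  exact: sideS_big.
Qed.
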